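(* Define $A_0=E_3$ and $B_0=F_3q^{-G_1-G_3}$, let $X=A_0B_0-q^{-2}B_0A_0$, and recursively for $k\ge1$ $$A_k=[2]_q^{-1}(A_{k-1}X-XA_{k-1}),\qquad B_k=[2]_q^{-1}(XB_{k-1}-B_{k-1}X).$$ Let $\mathcal E_{\alpha+\beta}(\zeta)=\sum_{k\ge0}A_k\zeta^k$ and $\mathcal E_{\delta-\alpha-\beta}(\zeta)=\sum_{k\ge0}B_k\zeta^k$. Then in $\mathrm U_q(\mathfrak{gl}_3)[[\zeta]]$: $$\mathcal E_{\alpha+\beta}(\zeta)=\kappa_q^{-1}N'_{31}N'_{11}(-q^{-2}\zeta)^{-1},\qquad \mathcal E_{\delta-\alpha-\beta}(\zeta)=\kappa_q^{-1}q^{-1}N'_{11}(-q^{-2}\zeta)^{-1}N'_{13}.$$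
   Context: Setting: $\hbar\in\mathbb C$, $q=e^\hbar$, $q^2\neq1$, $\kappa_q=q-q^{-1}$, $[\nu]_q=(q^\nu-q^{-\nu})/\kappa_q$ (so $[2]_q=q+q^{-1}$, assumed nonzero). Let $\mathfrak g=\mathbb CG_1\oplus\mathbb CG_2\oplus\mathbb CG_3$ and define linear forms $\alpha_1,\alpha_2$ on $\mathfrak g$ by $\alpha_1(G_1)=1,\alpha_1(G_2)=-1,\alpha_1(G_3)=0$, $\alpha_2(G_1)=0,\alpha_2(G_2)=1,\alpha_2(G_3)=-1$; put $H_1=G_1-G_2$, $H_2=G_2-G_3$. $\mathrm U_q(\mathfrak{gl}_3)$ is the unital associative $\mathbb C$-algebra generated by $E_1,E_2,F_1,F_2$ and symbols $q^X$, $X\in\mathfrak g$, with relations $q^0=1$, $q^{X_1}q^{X_2}=q^{X_1+X_2}$, $q^XE_iq^{-X}=q^{\alpha_i(X)}E_i$, $q^XF_iq^{-X}=q^{-\alpha_i(X)}F_i$, $[E_i,F_j]=\delta_{ij}(q^{H_i}-q^{-H_i})/\kappa_q$, and for $i\ne j$ the $q$-Serre relations $E_i^2E_j-[2]_qE_iE_jE_i+E_jE_i^2=0$, $F_i^2F_j-[2]_qF_iF_jF_i+F_jF_i^2=0$. For $\nu\in\mathbb C$ one writes $q^{X+\nu}=q^\nu q^X$. Further $E_3=E_1E_2-q^{-1}E_2E_1$, $F_3=F_2F_1-qF_1F_2$. In $\mathrm U_q(\mathfrak{gl}_3)[[\zeta]]$ ($\zeta$ a formal variable) let $N'_{11}(\zeta)=1-\zeta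 q^{-2G_1}$ (invertible as a series), $N'_{13}=\kappa_q qF_3q^{-G_1-G_3}$, $N'_{31}=\kappa_qE_3$; $N'_{11}(c\zeta)$ denotes substitution $\zeta\mapsto c\zeta$. *)

(* Defs.v *)
From HB Require Import structures.
From mathcomp Require Import all_boot all_order all_algebra.
Set Implicit Arguments. Unset Strict Implicit. Unset Printing Implicit Defensive.
Import Order.TTheory GRing.Theory Num.Theory.
Local Open Scope ring_scope.

Section Series.
Variable A : pzRingType.
Definition series := nat -> A.
Definition smul (f g : series) : series :=
  fun n => \sum_(i < n.+1) f i * g (n - i)%N.
Definition sone : series := fun n => if n == 0%N then 1 else 0.
Definition sconst (a : A) : series := fun n => if n == 0%N then a else 0.
Definition one_minus_zeta (a : A) : series :=
  fun n => if n == 0%N then 1 else if n == 1%N then - a else 0.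
End Series.

Section Uq.
Variables (K : fieldType) (A : algType K).

(* [e] plays the role of nu |-> q^nu = exp(hbar*nu);
   [qX a b c] plays the role of the symbol q^(a G1 + b G2 + c G3). *)
Definition is_Uqgl3 (e : K -> K) (E1 E2 F1 F2 : A) (qX : K -> K -> K -> A) : Prop :=
  let q := e 1 in
  let kq := q - q^-1 in
  let q2 := q + q^-1 in
  [/\ qX 0 0 0 = 1,
      (forall a b c a' b' c', qX a b c * qX a' b' c' = qX (a + a') (b + b') (c + c')),
      [/\ 
      (forall a b c, qX a b c * E1 * qX (- a) (- b) (- c) = e (a - b) *: E1),
      (forall a b c, qX a b c * E2 * qX (- a) (- b) (- c) = e (b - c) *: E2),
      (forall a b c, qX a b c * F1 * qX (- a) (- b) (- c) = e (- (a - b)) *: F1) &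
      (forall a b c, qX a b c * F2 * qX (- a) (- b) (- c) = e (- (b - c)) *: F2)],
      [/\ E1 * F1 - F1 * E1 = kq^-1 *: (qX 1 (-1) 0 - qX (-1) 1 0),
          E2 * F2 - F2 * E2 = kq^-1 *: (qX 0 1 (-1) - qX 0 (-1) 1),
          E1 * F2 - F2 * E1 = 0 &
          E2 * F1 - F1 * E2 = 0] &
      [/\ E1 ^+ 2 * E2 - q2 *: (E1 * E2 * E1) + E2 * E1 ^+ 2 = 0,
          E2 ^+ 2 * E1 - q2 *: (E2 * E1 * E2) + E1 * E2 ^+ 2 = 0,
          F1 ^+ 2 * F2 - q2 *: (F1 * F2 * F1) + F2 * F1 ^+ 2 = 0 &
          F2 ^+ 2 * F1 - q2 *: (F2 * F1 * F2) + F1 * F2 ^+ 2 = 0]].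

Fixpoint Akseq (t : K) (X A0 : A) (k : nat) : A :=
  if k is k'.+1 then t^-1 *: (Akseq t X A0 k' * X - X * Akseq t X A0 k') else A0.
Fixpoint Bkseq (t : K) (X B0 : A) (k : nat) : A :=
  if k is k'.+1 then t^-1 *: (X * Bkseq t X B0 k' - Bkseq t X B0 k' * X) else B0.
End Uq.

(* Main.v *)
Require Import Defs.
From HB Require Import structures.
From mathcomp Require Import all_boot all_order all_algebra.
From mathcomp Require Import ring zify.
From Stdlib Require Import FunctionalExtensionality.
Import Order.TTheory GRing.Theory Num.Theory.
Set Implicit Arguments. Unset Strict Implicit.
Local Open Scope ring_scope.

Ltac cancel_step :=
  match goal with
  | |- _ + - ?t = 0 => first [rewrite addrK | rewrite subrK | rewrite (addrAC _ t)]
  | |- _ + ?t = 0 => first [rewrite addrK | rewrite subrK | rewrite (addrAC _ (- t))]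
  end.
Ltac zsolve := apply/eqP; rewrite -subr_eq0; apply/eqP;
  rewrite ?opprD ?opprB ?opprK -[LHS]add0r ?addrA; repeat cancel_step; try by [].

Lemma comb_ (K : fieldType) (A : lmodType K) (x u : A) (a b : K) :
  x + a *: u + b *: u = x + (a + b) *: u.
Proof. by rewrite -addrA -scalerDl. Qed.
Lemma killL_ (K : fieldType) (A : lmodType K) (x u : A) (c : K) :
  c = 0 -> x = 0 -> x + c *: u = 0.
Proof. by move=> -> ->; rewrite scale0r addr0. Qed.

Ltac lstep := match goal with
 | |- _ + _ *: ?u = 0 => first [ rewrite comb_ | rewrite (addrAC _ (_ *: u)) | apply: killL_ ]
 end.
Ltac lnorm := apply/eqP; rewrite -subr_eq0; apply/eqP; rewrite -[LHS]scale1r;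
  repeat progress rewrite ?scalerDr ?scalerBr ?scalerN ?scalerA;
  rewrite ?opprD ?opprB ?opprK -?scaleNr -[LHS]add0r ?addrA.
Ltac lsolve := lnorm; repeat lstep; try reflexivity.
Section Ser.
Variable R : pzRingType.
Lemma smul_constl (c : R) (f : series R) n : smul (sconst c) f n = c * f n.
Proof.
rewrite /smul big_ord_recl /= /sconst eqxx subn0 big1 ?addr0 // => i _.
by rewrite mul0r.
Qed.
Lemma smul_constr (c : R) (f : series R) n : smul f (sconst c) n = f n * c.
Proof.
rewrite /smul big_ord_recr /= /sconst subnn eqxx big1 ?add0r // => i _.
have -> : (n - i == 0)%N = false by apply/negbTE/eqP; have := ltn_ord i; lia.
by rewrite mulr0.
Qed.
Lemma inv_ok (a : R) : smul (one_minus_zeta a) (fun n => a ^+ n) = sone R /\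
   smul (fun n => a ^+ n) (one_minus_zeta a) = sone R.
Proof.
split; apply: functional_extensionality => -[|n].
- by rewrite /smul big_ord1 /one_minus_zeta /sone /= mulr1.
- rewrite /smul big_ord_recl big_ord_recl /one_minus_zeta /sone /=.
  rewrite big1 ?addr0 => [|i _]; last by rewrite mul0r.
  by rewrite /bump /= ?subn0 ?subn1 /= mul1r mulNr -exprS subrr.
- by rewrite /smul big_ord1 /one_minus_zeta /sone /= mulr1.
- rewrite /smul big_ord_recr big_ord_recr /one_minus_zeta /sone /= subnn.
  rewrite big1 ?add0r => [|i _]; last first.
    have -> : (n.+1 - i == 0)%N = false by apply/negbTE/eqP; have := ltn_ord i; lia.
    have -> : (n.+1 - i == 1)%N = false by apply/negbTE/eqP; have := ltn_ord i; lia.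
    by rewrite mulr0.
  by rewrite subSnn /= mulr1 mulrN -exprSr addrC subrr.
Qed.
Lemma inv_uniq (a : R) (N : series R) : smul N (one_minus_zeta a) = sone R ->
  forall n, N n = a ^+ n.
Proof.
move=> H; elim => [|n IH].
  by have := congr1 (fun f => f 0%N) H; rewrite /smul big_ord1 /one_minus_zeta /sone /= mulr1.
have := congr1 (fun f => f n.+1) H.
rewrite /smul big_ord_recr big_ord_recr /one_minus_zeta /sone /= subnn.
rewrite big1 ?add0r => [|i _]; last first.
  have -> : (n.+1 - i == 0)%N = false by apply/negbTE/eqP; have := ltn_ord i; lia.
  have -> : (n.+1 - i == 1)%N = false by apply/negbTE/eqP; have := ltn_ord i; lia.
  by rewrite mulr0.
rewrite subSnn /= mulr1 mulrN IH => /eqP; rewrite addrC subr_eq0 => /eqP ->.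
by rewrite exprSr.
Qed.
End Ser.

Section Gen.
Variables (K : fieldType) (A : algType K).
Definition com (x y : A) := x * y - y * x.
Lemma comMr x y z : com x (y * z) = com x y * z + y * com x z.
Proof. rewrite /com mulrBl mulrBr !mulrA. zsolve. Qed.
Lemma comMl x y z : com (x * y) z = x * com y z + com x z * y.
Proof. rewrite /com mulrBl mulrBr !mulrA. zsolve. Qed.
Lemma comBl x y z : com (x - y) z = com x z - com y z.
Proof. rewrite /com mulrBl mulrBr. zsolve. Qed.
Lemma comBr x y z : com x (y - z) = com x y - com x z.
Proof. rewrite /com mulrBl mulrBr. zsolve. Qed.
Lemma comZl c x z : com (c *: x) z = c *: com x z.
Proof. by rewrite /com scalerBr -scalerAl -scalerAr. Qed.
Lemma comZr c x z : com x (c *: z) = c *: com x z.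
Proof. by rewrite /com scalerBr -scalerAl -scalerAr. Qed.
Lemma comxx x : com x x = 0.
Proof. exact: subrr. Qed.
Definition wt (P : A) (s : K) (Y : A) := P * Y = s *: (Y * P).
Lemma wt_mul P s1 s2 Y1 Y2 : wt P s1 Y1 -> wt P s2 Y2 -> wt P (s1 * s2) (Y1 * Y2).
Proof.
rewrite /wt => H1 H2. rewrite mulrA H1 -scalerAl -(mulrA Y1 P Y2) H2 -scalerAr scalerA !mulrA.
by [].
Qed.
Lemma wt_B P s Y1 Y2 : wt P s Y1 -> wt P s Y2 -> wt P s (Y1 - Y2).
Proof. rewrite /wt => H1 H2. by rewrite mulrBr H1 H2 mulrBl scalerBr. Qed.
Lemma wt_Z P s c Y : wt P s Y -> wt P s (c *: Y).
Proof. rewrite /wt => H. by rewrite -scalerAr H -scalerAl !scalerA mulrC. Qed.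
Lemma wt_eq P s s' Y : s = s' -> wt P s Y -> wt P s' Y.
Proof. by move=> ->. Qed.
End Gen.

Section Main.
Variables (K : fieldType) (A : algType K) (e : K -> K)
  (E1 E2 F1 F2 : A) (qX : K -> K -> K -> A).
Local Notation q := (e 1).
Local Notation kq := (e 1 - (e 1)^-1).
Local Notation q2 := (e 1 + (e 1)^-1).
Hypotheses (he0 : e 0 = 1) (heD : forall a b, e (a + b) = e a * e b)
  (hq2 : e 1 ^+ 2 != 1) (h2 : e 1 + (e 1)^-1 != 0).
Hypothesis qX0 : qX 0 0 0 = 1.
Hypothesis qXM : forall a b c a' b' c', qX a b c * qX a' b' c' = qX (a + a') (b + b') (c + c').
Hypothesis cE1 : forall a b c, qX a b c * E1 * qX (- a) (- b) (- c) = e (a - b) *: E1.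
Hypothesis cE2 : forall a b c, qX a b c * E2 * qX (- a) (- b) (- c) = e (b - c) *: E2.
Hypothesis cF1 : forall a b c, qX a b c * F1 * qX (- a) (- b) (- c) = e (- (a - b)) *: F1.
Hypothesis cF2 : forall a b c, qX a b c * F2 * qX (- a) (- b) (- c) = e (- (b - c)) *: F2.
Hypothesis r11 : E1 * F1 - F1 * E1 = kq^-1 *: (qX 1 (-1) 0 - qX (-1) 1 0).
Hypothesis r22 : E2 * F2 - F2 * E2 = kq^-1 *: (qX 0 1 (-1) - qX 0 (-1) 1).
Hypothesis r12 : E1 * F2 - F2 * E1 = 0.
Hypothesis r21 : E2 * F1 - F1 * E2 = 0.

Lemma eNe x : e x * e (- x) = 1.
Proof. by rewrite -heD subrr he0. Qed.
Lemma q0 : q != 0.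
Proof. apply/eqP => h; move: (eNe 1); rewrite h mul0r => /eqP; by rewrite eq_sym oner_eq0. Qed.
Lemma em1 : e (-1) = q^-1.
Proof. by apply: (mulfI q0); rewrite eNe mulfV //; exact: q0. Qed.
Lemma e2 : e 2 = q ^+ 2.
Proof. have -> : (2 : K) = 1 + 1 by ring. by rewrite heD expr2. Qed.
Lemma em2 : e (-2) = q ^- 2.
Proof. have -> : (-2 : K) = -1 + -1 by ring. by rewrite heD em1 -exprVn expr2. Qed.
Lemma kq0 : kq != 0.
Proof.
apply/eqP => h; move: hq2; have -> : q ^+ 2 = q * kq + 1.
  by field; exact: q0.
by rewrite h mulr0 add0r eqxx.
Qed.
Lemma qq1 : q * q - 1 != 0.
Proof. by rewrite subr_eq0 -expr2. Qed.
Lemma qq2 : q * q + 1 != 0.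
Proof.
have -> : q * q + 1 = q * q2 by field; exact: q0.
by rewrite mulf_neq0 // q0.
Qed.
Ltac fsol := field; rewrite ?q0 ?qq1 ?qq2 //.
Lemma qXV a b c : qX (- a) (- b) (- c) * qX a b c = 1.
Proof. by rewrite qXM !addNr qX0. Qed.
Lemma wtgen (Y : A) (f : K -> K -> K -> K) :
  (forall a b c, qX a b c * Y * qX (- a) (- b) (- c) = f a b c *: Y) ->
  forall a b c, wt (qX a b c) (f a b c) Y.
Proof.
move=> H a b c; rewrite /wt -[LHS]mulr1 -(qXV a b c) !mulrA H -scalerAl. by [].
Qed.
Lemma wtE1 a b c : wt (qX a b c) (e (a - b)) E1.
Proof. by apply: (@wtgen _ (fun a b c => e (a - b))); exact: cE1. Qed.
Lemma wtE2 a b c : wt (qX a b c) (e (b - c)) E2.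
Proof. by apply: (@wtgen _ (fun a b c => e (b - c))); exact: cE2. Qed.
Lemma wtF1 a b c : wt (qX a b c) (e (- (a - b))) F1.
Proof. by apply: (@wtgen _ (fun a b c => e (- (a - b)))); exact: cF1. Qed.
Lemma wtF2 a b c : wt (qX a b c) (e (- (b - c))) F2.
Proof. by apply: (@wtgen _ (fun a b c => e (- (b - c)))); exact: cF2. Qed.
Lemma wtqX a b c a' b' c' : wt (qX a b c) 1 (qX a' b' c').
Proof. by rewrite /wt scale1r !qXM; congr qX; ring. Qed.
Lemma wtE3 a b c : wt (qX a b c) (e (a - b) * e (b - c))
  (E1 * E2 - q^-1 *: (E2 * E1)).
Proof.
apply: wt_B; first exact: wt_mul (wtE1 _ _ _) (wtE2 _ _ _).
by apply: wt_Z; rewrite mulrC; apply: wt_mul (wtE2 _ _ _) (wtE1 _ _ _).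
Qed.
Lemma wtF3 a b c : wt (qX a b c) (e (- (b - c)) * e (- (a - b)))
  (F2 * F1 - q *: (F1 * F2)).
Proof.
apply: wt_B; first exact: wt_mul (wtF2 _ _ _) (wtF1 _ _ _).
by apply: wt_Z; rewrite mulrC; apply: wt_mul (wtF1 _ _ _) (wtF2 _ _ _).
Qed.
Lemma wtv (P : A) (s s' : K) (Y : A) : wt P s Y -> s = s' -> P * Y = s' *: (Y * P).
Proof. by move=> H <-. Qed.
Lemma eat x y : x = y -> e x = e y. Proof. by move=> ->. Qed.
Let E3 := E1 * E2 - q^-1 *: (E2 * E1).
Let F3 := F2 * F1 - q *: (F1 * F2).
Let K1 := qX 1 (-1) 0.
Let K1' := qX (-1) 1 0.
Let K2 := qX 0 1 (-1).
Let K2' := qX 0 (-1) 1.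
Let L := qX 1 0 (-1).
Let L' := qX (-1) 0 1.
Let D := qX (-1) 0 (-1).
Let C := qX (-2) 0 0.

Lemma e0' x : x = 0 -> e x = 1. Proof. by move=> ->. Qed.
Lemma e1' x : x = 1 -> e x = q. Proof. by move=> ->. Qed.
Lemma em1' x : x = -1 -> e x = q^-1. Proof. by move=> ->; exact: em1. Qed.
Lemma e2' x : x = 2 -> e x = q^+2. Proof. by move=> ->; exact: e2. Qed.
Lemma em2' x : x = -2 -> e x = q^-2. Proof. by move=> ->; exact: em2. Qed.

Lemma K1E2 : K1 * E2 = q^-1 *: (E2 * K1).
Proof. apply: wtv (wtE2 _ _ _) _; apply: em1'; ring. Qed.
Lemma K1'E2 : K1' * E2 = q *: (E2 * K1').
Proof. apply: wtv (wtE2 _ _ _) _; apply: e1'; ring. Qed.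
Lemma K2E1 : K2 * E1 = q^-1 *: (E1 * K2).
Proof. apply: wtv (wtE1 _ _ _) _; apply: em1'; ring. Qed.
Lemma K2'E1 : K2' * E1 = q *: (E1 * K2').
Proof. apply: wtv (wtE1 _ _ _) _; apply: e1'; ring. Qed.
Lemma K2F1 : K2 * F1 = q *: (F1 * K2).
Proof. apply: wtv (wtF1 _ _ _) _; apply: e1'; ring. Qed.
Lemma K1'F2 : K1' * F2 = q^-1 *: (F2 * K1').
Proof. apply: wtv (wtF2 _ _ _) _; apply: em1'; ring. Qed.
Lemma LE3 : L * E3 = q^+2 *: (E3 * L).
Proof. apply: wtv (wtE3 _ _ _) _; rewrite (e1' (x := 1 - 0)) ?(e1' (x := 0 - -1)) ?expr2 //; ring. Qed.
Lemma L'E3 : L' * E3 = q^-2 *: (E3 * L').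
Proof. apply: wtv (wtE3 _ _ _) _; rewrite (em1' (x := -1 - 0)) ?(em1' (x := 0 - 1)) -?exprVn ?expr2 //; ring. Qed.
Lemma DE3 : D * E3 = E3 * D.
Proof. rewrite -[RHS]scale1r; apply: wtv (wtE3 _ _ _) _; rewrite (em1' (x := -1 - 0)) ?(e1' (x := 0 - -1)) ?mulVf //; try ring; exact: q0. Qed.
Lemma CE3 : C * E3 = q^-2 *: (E3 * C).
Proof. apply: wtv (wtE3 _ _ _) _; rewrite (em2' (x := -2 - 0)) ?(e0' (x := 0 - 0)) ?mulr1 //; ring. Qed.
Lemma LF3 : L * F3 = q^-2 *: (F3 * L).
Proof. apply: wtv (wtF3 _ _ _) _; rewrite (em1' (x := - (0 - -1))) ?(em1' (x := - (1 - 0))) -?exprVn ?expr2 //; ring. Qed.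
Lemma L'F3 : L' * F3 = q^+2 *: (F3 * L').
Proof. apply: wtv (wtF3 _ _ _) _; rewrite (e1' (x := - (0 - 1))) ?(e1' (x := - (-1 - 0))) ?expr2 //; ring. Qed.
Lemma DF3 : D * F3 = F3 * D.
Proof. rewrite -[RHS]scale1r; apply: wtv (wtF3 _ _ _) _; rewrite (em1' (x := - (0 - -1))) ?(e1' (x := - (-1 - 0))) ?mulVf //; try ring; exact: q0. Qed.
Lemma CF3 : C * F3 = q^+2 *: (F3 * C).
Proof. apply: wtv (wtF3 _ _ _) _; rewrite (e0' (x := - (0 - 0))) ?(e2' (x := - (-2 - 0))) ?mul1r //; ring. Qed.
Let hh1 := kq^-1 *: (K1 - K1').
Let hh2 := kq^-1 *: (K2 - K2').
Lemma c1 : com E3 F1 = - (E2 * K1').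
Proof.
rewrite /E3 comBl comZl !comMl [com E2 F1]r21 [com E1 F1]r11 mulr0 add0r mul0r addr0.
rewrite -/K1 -/K1' -scalerAl -scalerAr mulrBl mulrBr K1E2 K1'E2.
lsolve; fsol.
Qed.
Lemma c2 : com E3 F2 = q^-1 *: (E1 * K2).
Proof.
rewrite /E3 comBl comZl !comMl [com E2 F2]r22 [com E1 F2]r12 mul0r addr0 mulr0 add0r.
rewrite -/K2 -/K2' -scalerAl -scalerAr mulrBl mulrBr K2E1 K2'E1.
lsolve; fsol.
Qed.
Lemma e11 : E1 * F1 = hh1 + F1 * E1.
Proof. apply/eqP; rewrite -subr_eq; apply/eqP; exact: r11. Qed.
Lemma e22 : E2 * F2 = hh2 + F2 * E2.
Proof. apply/eqP; rewrite -subr_eq; apply/eqP; exact: r22. Qed.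
Lemma HH : com E3 F3 = kq^-1 *: (L - L').
Proof.
rewrite /F3 comBr comZr !comMr c1 c2.
rewrite -!scalerAl -!scalerAr mulrN mulNr -!mulrA K2F1 K1'F2 -!scalerAr !mulrA e11 e22 !mulrDl.
rewrite /hh1 /hh2 -!scalerAl !mulrBl /K1 /K1' /K2 /K2' /L /L' !qXM.
rewrite ?addr0 ?add0r ?addrN ?addNr.
lsolve; fsol.
Qed.
Let X := E3 * (F3 * D) - q^-2 *: (F3 * D * E3).
Lemma comE3D : com E3 D = 0. Proof. by rewrite /com DE3 subrr. Qed.
Lemma comF3D : com F3 D = 0. Proof. by rewrite /com DF3 subrr. Qed.
Lemma comDF3 : com D F3 = 0. Proof. by rewrite /com DF3 subrr. Qed.
Lemma qXeq a b c a' b' c' : a = a' -> b = b' -> c = c' -> qX a b c = qX a' b' c'.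
Proof. by move=> -> -> ->. Qed.
Lemma LD : L * D = qX 0 0 (-2). Proof. rewrite /L /D qXM; apply: qXeq; ring. Qed.
Lemma L'D : L' * D = C. Proof. rewrite /L' /D /C qXM; apply: qXeq; ring. Qed.
Lemma LDD : L * (D * D) = qX (-1) 0 (-3). Proof. rewrite /L /D !qXM; apply: qXeq; ring. Qed.
Lemma DLD : D * (L * D) = qX (-1) 0 (-3). Proof. rewrite /L /D !qXM; apply: qXeq; ring. Qed.
Lemma L'DD : L' * (D * D) = C * D. Proof. rewrite /L' /D /C !qXM; apply: qXeq; ring. Qed.
Lemma DL'D : D * (L' * D) = C * D. Proof. rewrite /L' /D /C !qXM; apply: qXeq; ring. Qed.
Ltac simp0 := repeat progress rewrite ?mulr0 ?mul0r ?addr0 ?add0r ?scaler0 ?subr0 ?sub0r.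
Ltac pushs := repeat progress rewrite -?scalerAl -?scalerAr ?mulrBl ?mulrBr ?mulrDl ?mulrDr ?mulNr ?mulrN.

Lemma key1g (Z W : A) : D * Z = Z * D -> L * Z = q^+2 *: (Z * L) ->
  L' * Z = q^-2 *: (Z * L') -> com Z W = kq^-1 *: (L - L') ->
  com Z (Z * (W * D) - q^-2 *: (W * D * Z)) = (- q^-2 * q2) *: (Z * C).
Proof.
move=> hD hL hL' hH.
have hZD : com Z D = 0 by rewrite /com hD subrr.
rewrite comBr comZr !comMr comxx hZD hH; simp0.
pushs.
rewrite -(mulrA L D Z) -(mulrA L' D Z) hD !mulrA hL hL'. pushs.
rewrite -!mulrA LD L'D.
lsolve; fsol.
Qed.
Lemma key2g (Z W : A) : D * Z = Z * D -> D * W = W * D -> L * W = q^-2 *: (W * L) ->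
  L' * W = q^+2 *: (W * L') -> C * W = q^+2 *: (W * C) -> com Z W = kq^-1 *: (L - L') ->
  com (Z * (W * D) - q^-2 *: (W * D * Z)) (W * D) = (- q^-2 * q2) *: (C * (W * D)).
Proof.
move=> hDZ hDW hL hL' hC hH.
have hZD : com Z D = 0 by rewrite /com hDZ subrr.
have hWD : com W D = 0 by rewrite /com hDW subrr.
have hDW' : com D W = 0 by rewrite /com hDW subrr.
rewrite comMr !comBl !comZl !comMl !comxx hZD hWD hDW' hH; simp0.
pushs. rewrite !mulrA hL hL' hC. pushs.
rewrite -!mulrA LDD DLD L'DD DL'D.
simp0; lsolve; fsol.
Qed.

Lemma CX : C * X = X * C.
Proof.
have w1 : wt C (q^-2 * (q^+2 * 1)) (E3 * (F3 * D)) :=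
  wt_mul CE3 (wt_mul CF3 (wtqX (-2) 0 0 (-1) 0 (-1))).
have w2 : wt C (q^+2 * 1 * q^-2) (F3 * D * E3) :=
  wt_mul (wt_mul CF3 (wtqX (-2) 0 0 (-1) 0 (-1))) CE3.
have : wt C 1 X.
  apply: wt_B; first by apply: wt_eq w1; fsol.
  by apply: wt_Z; apply: wt_eq w2; fsol.
by rewrite /wt scale1r.
Qed.
Let a := (- q^-2) *: C.
Lemma aX n : X * a ^+ n = a ^+ n * X.
Proof.
apply: commrX. by rewrite /GRing.comm /a -scalerAr -scalerAl CX.
Qed.
Lemma Akseq_E n : Akseq q2 X E3 n = E3 * a ^+ n.
Proof.
elim: n => [|n IH] /=; first by rewrite expr0 mulr1.
rewrite IH -(mulrA E3) -aX mulrA mulrA -mulrBl.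
have -> : E3 * X - X * E3 = com E3 X by [].
rewrite (key1g DE3 LE3 L'E3 HH) (exprS a n) /a -!scalerAl -scalerAr scalerA mulrA.
congr (_ *: _); [fsol | by rewrite ?mulrA].
Qed.
Lemma Bkseq_E n : Bkseq q2 X (F3 * D) n = a ^+ n * (F3 * D).
Proof.
elim: n => [|n IH] /=; first by rewrite expr0 mul1r.
rewrite IH mulrA aX -mulrA -(mulrA (a ^+ n)) -mulrBr.
have -> : X * (F3 * D) - F3 * D * X = com X (F3 * D) by [].
rewrite (key2g DE3 DF3 LF3 L'F3 CF3 HH) (exprSr a n) /a -!scalerAr -scalerAl scalerA !mulrA.
congr (_ *: _); try (by rewrite ?mulrA); fsol.
Qed.
Lemma main_sec :
  (exists Ninv : series A, smul (one_minus_zeta a) Ninv = sone A /\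
                           smul Ninv (one_minus_zeta a) = sone A) /\
  (forall Ninv : series A, smul (one_minus_zeta a) Ninv = sone A ->
     smul Ninv (one_minus_zeta a) = sone A ->
     Akseq q2 X E3 = (fun n => kq^-1 *: smul (sconst (kq *: E3)) Ninv n) /\
     Bkseq q2 X (F3 * D) =
       (fun n => (kq^-1 * q^-1) *: smul Ninv (sconst ((kq * q) *: (F3 * D))) n)).
Proof.
split; first by exists (fun n => a ^+ n); exact: inv_ok.
move=> N _ hN'; have hN := inv_uniq hN'.
split; apply: functional_extensionality => n.
- rewrite Akseq_E smul_constl hN -scalerAl scalerA mulVf ?scale1r //; exact: kq0.
- rewrite Bkseq_E smul_constr hN -scalerAr scalerA.
  have -> : (kq^-1 * q^-1) * (kq * q) = 1 by fsol.
  by rewrite scale1r.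
Qed.
End Main.

Theorem mainTheorem7 (K : numClosedFieldType) (A : algType K) (e : K -> K)
  (E1 E2 F1 F2 : A) (qX : K -> K -> K -> A)
  (he0 : e 0 = 1) (heD : forall a b, e (a + b) = e a * e b)
  (hq2 : e 1 ^+ 2 != 1) (h2 : e 1 + (e 1)^-1 != 0)
  (hU : is_Uqgl3 e E1 E2 F1 F2 qX) :
  let q := e 1 in
  let kq := q - q^-1 in
  let q2 := q + q^-1 in
  let E3 := E1 * E2 - q^-1 *: (E2 * E1) in
  let F3 := F2 * F1 - q *: (F1 * F2) in
  let A0 := E3 in
  let B0 := F3 * qX (-1) 0 (-1) in
  let X := A0 * B0 - q ^- 2 *: (B0 * A0) in
  let EAB : series A := Akseq q2 X A0 in
  let EDAB : series A := Bkseq q2 X B0 in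
  let N11 : series A := one_minus_zeta ((- q ^- 2) *: qX (-2) 0 0) in
  let N13 := (kq * q) *: (F3 * qX (-1) 0 (-1)) in
  let N31 := kq *: E3 in
  (exists Ninv : series A, smul N11 Ninv = sone A /\ smul Ninv N11 = sone A) /\
  (forall Ninv : series A, smul N11 Ninv = sone A -> smul Ninv N11 = sone A ->
     EAB = (fun n => kq^-1 *: smul (sconst N31) Ninv n) /\
     EDAB = (fun n => (kq^-1 * q^-1) *: smul Ninv (sconst N13) n)).
Proof.
move=> q kq q2 E3 F3 A0 B0 X EAB EDAB N11 N13 N31.
case: hU => h0 hM [c1 c2 c3 c4] [r1 r2 r3 r4] _.
exact: (main_sec he0 heD hq2 h2 h0 hM c1 c2 c3 c4 r1 r2 r3 r4).
Qed.
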